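(* Let $A,B$ be finite-dimensional Hilbert spaces, $\rho$ a density matrix on $A\otimes B$, and $|\phi\rangle\in A\otimes B$ a pure state of Schmidt rank at most $r$. Let $W\subseteq A$ be a subspace with orthogonal projection $\Pi_W$ such that $\|(I-\Pi_W)\,\mathrm{tr}_B(\rho)\,(I-\Pi_W)\|_\infty\le\eta$. Then \[ \big|\langle\phi|(\Pi_W\otimes I)\rho(\Pi_W\otimes I)|\phi\rangle-\langle\phi|\rho|\phi\rangle\big|\le 2r\sqrt\eta. \]
   Context: $\|\cdot\|_\infty$ is the operator norm; the Schmidt rank of $|\phi\rangle$ is the rank of its Schmidt decomposition with respect to the bipartition $A\otimes B$. *)

(* Defs.v *)
(* finite-dimensional Hilbert spaces A = C^m, B = C^n over
   an arbitrary numClosedFieldType C (e.g. complex R for R : realType, or C); A (x) B = C^(m*n) via mxtens. *)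
From HB Require Import structures.
From mathcomp Require Import all_boot all_order all_algebra all_field.
From mathcomp Require Import mxtens.
Set Implicit Arguments. Unset Strict Implicit. Unset Printing Implicit Defensive.
Import Order.TTheory GRing.Theory Num.Theory.
Local Open Scope ring_scope.

Section QDefs.
Variable C : numClosedFieldType.

Definition adj {m n : nat} (M : 'M[C]_(m, n)) : 'M[C]_(n, m) :=
  (map_mx (fun z : C => z^*) M)^T.

Definition dotv {m : nat} (u v : 'cV[C]_m) : C := (adj u *m v) 0 0.

Definition vnorm {m : nat} (u : 'cV[C]_m) : C := sqrtC (dotv u u).

Definition expect {m : nat} (phi : 'cV[C]_m) (X : 'M[C]_m) : C :=
  dotv phi (X *m phi).

Definition is_density {m : nat} (rho : 'M[C]_m) : Prop :=
  [/\ adj rho = rho, (forall x : 'cV[C]_m, 0 <= dotv x (rho *m x))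
    & \tr rho = 1].

Definition is_pure_state {m : nat} (phi : 'cV[C]_m) : Prop := dotv phi phi = 1.

Definition orthonormal_family {m s : nat} (u : 'I_s -> 'cV[C]_m) : Prop :=
  forall i j, dotv (u i) (u j) = (i == j)%:R.

Definition schmidt_rank_le {m n : nat} (phi : 'cV[C]_(m * n)) (r : nat) : Prop :=
  exists s : nat, (s <= r)%N /\
  exists (lam : 'I_s -> C) (u : 'I_s -> 'cV[C]_m) (v : 'I_s -> 'cV[C]_n),
    [/\ forall k, 0 < lam k, orthonormal_family u, orthonormal_family v &
        phi = \sum_(k < s) lam k *: (u k *t v k)].

(* orthogonal projection (onto its range W) *)
Definition is_orth_proj {m : nat} (P : 'M[C]_m) : Prop :=
  P *m P = P /\ adj P = P.

Definition ptraceB {m n : nat} (rho : 'M[C]_(m * n)) : 'M[C]_m :=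
  \matrix_(i, j) \sum_(k < n) rho (mxtens_index (i, k)) (mxtens_index (j, k)).

(* ||X||_oo <= eta  (operator norm: sup of ||X x|| over ||x|| <= 1) *)
Definition opnorm_le {m : nat} (X : 'M[C]_m) (eta : C) : Prop :=
  forall x : 'cV[C]_m, vnorm (X *m x) <= eta * vnorm x.

End QDefs.

(* Main.v *)
Require Import Defs.
From HB Require Import structures.
From mathcomp Require Import all_boot all_order all_algebra all_field.
From mathcomp Require Import mxtens.
From mathcomp Require Import ring lra.
Import Order.TTheory GRing.Theory Num.Theory.
Local Open Scope ring_scope.
Set Implicit Arguments. Unset Strict Implicit. Unset Printing Implicit Defensive.

Section Basic.
Variable C : numClosedFieldType.

Lemma dotvE m (x y : 'cV[C]_m) : dotv x y = \sum_i (x i 0)^* * y i 0.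
Proof. by rewrite /dotv /adj !mxE; apply: eq_bigr => i _; rewrite !mxE. Qed.

Lemma adjE m n (A : 'M[C]_(m,n)) i j : adj A i j = (A j i)^*.
Proof. by rewrite /adj !mxE. Qed.

Lemma dotv_conj m (x y : 'cV[C]_m) : (dotv x y)^* = dotv y x.
Proof.
rewrite !dotvE rmorph_sum; apply: eq_bigr => i _.
by rewrite rmorphM /= conjCK mulrC.
Qed.

Lemma dotvDl m (x y z : 'cV[C]_m) : dotv (x + y) z = dotv x z + dotv y z.
Proof. by rewrite !dotvE -big_split; apply: eq_bigr => i _; rewrite !mxE rmorphD mulrDl. Qed.
Lemma dotvDr m (x y z : 'cV[C]_m) : dotv z (x + y) = dotv z x + dotv z y.
Proof. by rewrite !dotvE -big_split; apply: eq_bigr => i _; rewrite !mxE mulrDr. Qed.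
Lemma dotvZl m a (x z : 'cV[C]_m) : dotv (a *: x) z = a^* * dotv x z.
Proof. by rewrite !dotvE mulr_sumr; apply: eq_bigr => i _; rewrite !mxE rmorphM mulrA. Qed.
Lemma dotvZr m a (x z : 'cV[C]_m) : dotv z (a *: x) = a * dotv z x.
Proof. by rewrite !dotvE mulr_sumr; apply: eq_bigr => i _; rewrite !mxE mulrCA. Qed.
Lemma dotvNl m (x z : 'cV[C]_m) : dotv (- x) z = - dotv x z.
Proof. by rewrite -scaleN1r dotvZl rmorphN rmorph1 mulN1r. Qed.
Lemma dotvNr m (x z : 'cV[C]_m) : dotv z (- x) = - dotv z x.
Proof. by rewrite -scaleN1r dotvZr mulN1r. Qed.
Lemma dotv_suml m k (F : 'I_k -> 'cV[C]_m) z : dotv (\sum_i F i) z = \sum_i dotv (F i) z.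
Proof.
rewrite dotvE; under eq_bigr do rewrite summxE rmorph_sum mulr_suml.
by rewrite exchange_big; apply: eq_bigr => j _; rewrite dotvE.
Qed.
Lemma dotv_sumr m k (F : 'I_k -> 'cV[C]_m) z : dotv z (\sum_i F i) = \sum_i dotv z (F i).
Proof.
rewrite dotvE; under eq_bigr do rewrite summxE mulr_sumr.
by rewrite exchange_big; apply: eq_bigr => j _; rewrite dotvE.
Qed.

Lemma dotv_adj m n (A : 'M[C]_(m,n)) x y : dotv x (A *m y) = dotv (adj A *m x) y.
Proof.
rewrite !dotvE; under eq_bigr do rewrite mxE big_distrr.
rewrite exchange_big; apply: eq_bigr => j _.
rewrite mxE rmorph_sum big_distrl; apply: eq_bigr => i _ /=.
by rewrite adjE rmorphM /= conjCK mulrA [_ * A i j]mulrC.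
Qed.

Lemma dotv_ge0 m (x : 'cV[C]_m) : 0 <= dotv x x.
Proof.
by rewrite dotvE sumr_ge0 // => i _; rewrite mulrC -normCK exprn_ge0.
Qed.

Lemma adjK m n (A : 'M[C]_(m,n)) : adj (adj A) = A.
Proof. by apply/matrixP => i j; rewrite !adjE conjCK. Qed.

Lemma adjM m n p (A : 'M[C]_(m,n)) (B : 'M[C]_(n,p)) : adj (A *m B) = adj B *m adj A.
Proof.
apply/matrixP => i j; rewrite adjE !mxE rmorph_sum; apply: eq_bigr => k _.
by rewrite !adjE rmorphM mulrC.
Qed.

Lemma adjD m n (A B : 'M[C]_(m,n)) : adj (A + B) = adj A + adj B.
Proof. by apply/matrixP => i j; rewrite [RHS]mxE !adjE mxE rmorphD. Qed.
Lemma adjN m n (A : 'M[C]_(m,n)) : adj (- A) = - adj A.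
Proof. by apply/matrixP => i j; rewrite [RHS]mxE !adjE mxE rmorphN. Qed.
Lemma adj1 m : adj (1%:M : 'M[C]_m) = 1%:M.
Proof. by apply/matrixP => i j; rewrite adjE !mxE eq_sym; case: eqP => _; rewrite ?rmorph1 ?rmorph0. Qed.


Definition fm m (M : 'M[C]_m) x y := dotv x (M *m y).

Lemma fm_conj m (M : 'M[C]_m) x y : adj M = M -> (fm M x y)^* = fm M y x.
Proof. by move=> hM; rewrite /fm dotv_conj dotv_adj hM. Qed.

Lemma fm_expand m (M : 'M[C]_m) x y s t : adj M = M ->
  fm M (s *: x + t *: y) (s *: x + t *: y) =
  s^* * s * fm M x x + s^* * t * fm M x y + t^* * s * (fm M x y)^* + t^* * t * fm M y y.
Proof.
move=> hM; rewrite fm_conj // /fm mulmxDr -!scalemxAr dotvDl !dotvDr !dotvZl !dotvZr.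
ring.
Qed.

Lemma real_conj (c : C) : 0 <= c -> c^* = c.
Proof. by move=> hc; rewrite conj_Creal // ger0_real. Qed.

Lemma fm_CS m (M : 'M[C]_m) x y : adj M = M -> (forall z, 0 <= fm M z z) ->
  `|fm M x y| ^+ 2 <= fm M x x * fm M y y.
Proof.
move=> hM psd.
have key : forall x y, fm M y y != 0 -> `|fm M x y| ^+ 2 <= fm M x x * fm M y y.
  move=> x' y' hc.
  have := psd (fm M y' y' *: x' + (- (fm M x' y')^*) *: y').
  rewrite fm_expand // real_conj ?psd // rmorphN /= conjCK normCK.
  have hc0 : 0 < fm M y' y' by rewrite lt_def hc psd.
  set a := fm M x' x'; set c := fm M y' y'; set z := fm M x' y'.
  have -> : c * c * a + c * - z^* * z + - z * c * z^* + - z * - z^* * c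
          = c * (a * c - z * z^*) by ring.
  by rewrite pmulr_rge0 // subr_ge0.
have [hc|hc] := eqVneq (fm M y y) 0; last exact: key.
have [ha|ha] := eqVneq (fm M x x) 0; last first.
  rewrite mulrC -(norm_conjC (fm M x y)) (fm_conj _ _ hM); exact: key.
have := psd (1 *: x + (- (fm M x y)^*) *: y).
rewrite fm_expand // ha hc rmorphN /= conjCK rmorph1 normCK mulr0.
set z := fm M x y.
have -> : 0 + 1 * - z^* * z + - z * 1 * z^* + - z * - z^* * 0
        = - (2%:R * (z * z^*)) by ring.
rewrite oppr_ge0 mulr0 => h; rewrite le_eqVlt; apply/orP; left.
have : 0 <= z * z^* by rewrite -normCK exprn_ge0.
move=> h2. rewrite eq_le h2 andbT.
by rewrite -(@pmulr_rle0 _ 2%:R) ?ltr0n.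
Qed.


Lemma fmE m (M : 'M[C]_m) x y :
  fm M x y = \sum_i \sum_j (x i 0)^* * M i j * y j 0.
Proof.
rewrite /fm dotvE; apply: eq_bigr => i _; rewrite mxE big_distrr.
by apply: eq_bigr => j _; rewrite /= mulrA.
Qed.

Lemma fm_delta m (M : 'M[C]_m) i j :
  fm M (delta_mx i 0) (delta_mx j 0) = M i j.
Proof.
rewrite fmE (bigD1 i) //= [X in _ + X]big1 => [|k hk]; last first.
  by apply: big1 => l _; rewrite !mxE (negPf hk) rmorph0 !mul0r.
rewrite addr0 (bigD1 j) //= [X in _ + X]big1 => [|l hl]; last by rewrite !mxE (negPf hl) mulr0.
by rewrite !mxE !eqxx rmorph1 mul1r mulr1 addr0.
Qed.

Lemma fm1 m (x y : 'cV[C]_m) : fm 1%:M x y = dotv x y.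
Proof. by rewrite /fm mul1mx. Qed.

Lemma dotv_CS m (x y : 'cV[C]_m) : `|dotv x y| ^+ 2 <= dotv x x * dotv y y.
Proof.
rewrite -!fm1; apply: fm_CS; first exact: adj1.
by move=> z; rewrite fm1 dotv_ge0.
Qed.

Lemma fm_trace m (M : 'M[C]_m) x : adj M = M -> (forall z, 0 <= fm M z z) ->
  fm M x x <= \tr M * dotv x x.
Proof.
move=> hM psd.
have Mii i : 0 <= M i i by rewrite -fm_delta psd.
pose s i := sqrtC (M i i).
have s0 i : 0 <= s i by rewrite sqrtC_ge0.
have Mij i j : `|M i j| <= s i * s j.
  rewrite -ler_sqr ?nnegrE ?mulr_ge0 //.
  by rewrite exprMn !sqrtCK -!fm_delta fm_CS.
pose X : 'cV[C]_m := \col_i `|x i 0|.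
pose S : 'cV[C]_m := \col_i s i.
have hXS : dotv X S = \sum_i `|x i 0| * s i.
  by rewrite dotvE; apply: eq_bigr => i _; rewrite !mxE real_conj.
have XS0 : 0 <= dotv X S by rewrite hXS sumr_ge0 // => i _; rewrite mulr_ge0.
have hXX : dotv X X = dotv x x.
  rewrite !dotvE; apply: eq_bigr => i _; rewrite !mxE real_conj //.
  by rewrite -expr2 normCK mulrC.
have hSS : dotv S S = \tr M.
  rewrite dotvE /mxtrace; apply: eq_bigr => i _; rewrite !mxE real_conj //.
  by rewrite -expr2 sqrtCK.
apply: le_trans (_ : dotv X S ^+ 2 <= _); last first.
  by rewrite -{1}(ger0_norm XS0) mulrC -hXX -hSS dotv_CS.
rewrite -(ger0_norm (psd x)) fmE.
apply: le_trans (ler_norm_sum _ _ _) _.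
rewrite expr2 {1}hXS mulr_suml; apply: ler_sum => i _.
rewrite hXS mulr_sumr; apply: le_trans (ler_norm_sum _ _ _) _.
apply: ler_sum => j _.
rewrite !normrM norm_conjC.
have := Mij i j; move: (s0 i) (s0 j) => a b h.
have : `|x i 0| * `|M i j| * `|x j 0| <= `|x i 0| * (s i * s j) * `|x j 0|.
  by rewrite ler_wpM2r // ler_wpM2l.
by move=> h2; apply: (le_trans h2); rewrite le_eqVlt; apply/orP; left; apply/eqP; ring.
Qed.


Lemma fmDl m (M : 'M[C]_m) x y z : fm M (x + y) z = fm M x z + fm M y z.
Proof. by rewrite /fm dotvDl. Qed.
Lemma fmBl m (M : 'M[C]_m) x y z : fm M (x - y) z = fm M x z - fm M y z.
Proof. by rewrite /fm dotvDl dotvNl. Qed.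
Lemma fmBr m (M : 'M[C]_m) x y z : fm M z (x - y) = fm M z x - fm M z y.
Proof. by rewrite /fm mulmxBr dotvDr dotvNr. Qed.

Definition gram m k (M : 'M[C]_m) (w : 'I_k -> 'cV[C]_m) : 'M[C]_k :=
  \matrix_(i, j) fm M (w i) (w j).

Lemma gram_expand m k (M : 'M[C]_m) (w : 'I_k -> 'cV[C]_m) (c d : 'I_k -> C) :
  fm M (\sum_i c i *: w i) (\sum_j d j *: w j) =
  fm (gram M w) (\col_i c i) (\col_j d j).
Proof.
rewrite [RHS]fmE /fm dotv_suml; apply: eq_bigr => i _.
rewrite mulmx_sumr dotv_sumr; apply: eq_bigr => j _.
by rewrite -scalemxAr dotvZl dotvZr !mxE /fm [RHS]mulrAC -mulrA.
Qed.

Lemma gram_adj m k (M : 'M[C]_m) (w : 'I_k -> 'cV[C]_m) :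
  adj M = M -> adj (gram M w) = gram M w.
Proof. by move=> hM; apply/matrixP => i j; rewrite adjE !mxE fm_conj. Qed.

Lemma gram_psd m k (M : 'M[C]_m) (w : 'I_k -> 'cV[C]_m) :
  (forall z, 0 <= fm M z z) -> forall z, 0 <= fm (gram M w) z z.
Proof.
move=> psd z.
have -> : z = \col_i z i 0 by apply/matrixP => i j; rewrite !mxE ord1.
by rewrite -gram_expand psd.
Qed.

Lemma gram_bound m k (M : 'M[C]_m) (w : 'I_k -> 'cV[C]_m) (c : 'I_k -> C) :
  adj M = M -> (forall z, 0 <= fm M z z) ->
  fm M (\sum_i c i *: w i) (\sum_i c i *: w i) <=
  (\sum_i fm M (w i) (w i)) * dotv (\col_i c i) (\col_i c i).
Proof.
move=> hM psd; rewrite gram_expand.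
have -> : \sum_i fm M (w i) (w i) = \tr (gram M w).
  by rewrite /mxtrace; apply: eq_bigr => i _; rewrite mxE.
by apply: fm_trace; [apply: gram_adj | apply: gram_psd].
Qed.


Lemma sum_tens m n (F : 'I_(m * n) -> C) :
  \sum_I F I = \sum_i \sum_j F (mxtens_index (i, j)).
Proof.
rewrite pair_big (reindex (@mxtens_index m n)) /=.
  by apply: eq_bigr => -[i j].
by exists (@mxtens_unindex m n) => k _; rewrite (mxtens_indexK, mxtens_unindexK).
Qed.

Lemma tens_entry m n (x : 'cV[C]_m) (y : 'cV[C]_n) i j j0 :
  (x *t y) (mxtens_index (i, j)) j0 = x i 0 * y j 0.
Proof.
case: (mxtens_indexP j0) => a b.
by rewrite tensmxE !ord1.
Qed.

Lemma dotv_tens m n (x x' : 'cV[C]_m) (y y' : 'cV[C]_n) :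
  dotv (x *t y) (x' *t y') = dotv x x' * dotv y y'.
Proof.
rewrite dotvE sum_tens !dotvE mulr_suml; apply: eq_bigr => i _.
rewrite mulr_sumr; apply: eq_bigr => j _.
by rewrite !tens_entry rmorphM /=; ring.
Qed.

Lemma adj_tens m n p q (A : 'M[C]_(m,n)) (B : 'M[C]_(p,q)) :
  adj (A *t B) = adj A *t adj B.
Proof.
apply/matrixP => I J.
case: (mxtens_indexP I) => i k; case: (mxtens_indexP J) => j l.
by rewrite adjE !tensmxE !adjE rmorphM.
Qed.

Lemma tensmxBl m n p q (A B : 'M[C]_(m,n)) (D : 'M[C]_(p,q)) :
  (A - B) *t D = A *t D - B *t D.
Proof.
apply/matrixP => I J.
case: (mxtens_indexP I) => i k; case: (mxtens_indexP J) => j l.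
by rewrite [RHS]mxE !tensmxE [in RHS]mxE tensmxE mxE [in LHS]mxE mulrBl.
Qed.

Lemma mul_tens1 m n (A : 'M[C]_m) (x : 'cV[C]_m) (y : 'cV[C]_n) :
  (A *t (1%:M : 'M[C]_n)) *m (x *t y) = (A *m x) *t y.
Proof. by rewrite tensmx_mul mul1mx. Qed.

Lemma tens_decomp m n (x : 'cV[C]_m) (v : 'cV[C]_n) :
  x *t v = \sum_j v j 0 *: (x *t (delta_mx j 0 : 'cV[C]_n)).
Proof.
apply/matrixP => I J.
case: (mxtens_indexP I) => i k; case: (mxtens_indexP J) => a b.
rewrite [a]ord1 [b]ord1 summxE tens_entry (bigD1 k) //= [X in _ + X]big1 => [|l hl].
  by rewrite !mxE !mxtens_indexK /= !eqxx mulr1 addr0 mulrC.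
by rewrite !mxE !mxtens_indexK /= (eq_sym k l) (negPf hl) !mulr0.
Qed.

Lemma sum_tens_delta m n (x : 'cV[C]_m) (j : 'I_n) (F : 'I_(m * n) -> C) :
  \sum_J F J * (x *t (delta_mx j 0 : 'cV[C]_n)) J 0 =
  \sum_i F (mxtens_index (i, j)) * x i 0.
Proof.
rewrite sum_tens; apply: eq_bigr => i _.
rewrite (bigD1 j) //= [X in _ + X]big1 => [|k hk].
  by rewrite tens_entry !mxE !eqxx mulr1 addr0.
by rewrite tens_entry !mxE (negPf hk) mulr0 mulr0.
Qed.

Lemma dotv_tens_delta m n (x : 'cV[C]_m) (j : 'I_n) (y : 'cV[C]_(m * n)) :
  dotv (x *t (delta_mx j 0 : 'cV[C]_n)) y = \sum_i (x i 0)^* * y (mxtens_index (i, j)) 0.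
Proof.
rewrite -dotv_conj dotvE sum_tens_delta rmorph_sum; apply: eq_bigr => i _.
by rewrite rmorphM /= conjCK mulrC.
Qed.

Lemma ptrace_sum m n (rho : 'M[C]_(m * n)) (x : 'cV[C]_m) :
  \sum_j fm rho (x *t (delta_mx j 0 : 'cV[C]_n)) (x *t (delta_mx j 0 : 'cV[C]_n))
  = dotv x (ptraceB rho *m x).
Proof.
have -> : dotv x (ptraceB rho *m x) = fm (ptraceB rho) x x by [].
rewrite fmE.
under eq_bigr do rewrite /fm dotv_tens_delta.
rewrite exchange_big; apply: eq_bigr => i _.
under eq_bigr do rewrite mxE sum_tens_delta mulr_sumr.
rewrite exchange_big; apply: eq_bigr => i' _.
rewrite mxE big_distrr big_distrl; apply: eq_bigr => j _ /=.
by rewrite mulrA.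
Qed.


Lemma tens_form_bound m n (rho : 'M[C]_(m * n)) (x : 'cV[C]_m) (v : 'cV[C]_n) :
  adj rho = rho -> (forall z, 0 <= fm rho z z) -> dotv v v = 1 ->
  fm rho (x *t v) (x *t v) <= dotv x (ptraceB rho *m x).
Proof.
move=> hH psd hv; rewrite tens_decomp.
apply: le_trans (gram_bound _ _ hH psd) _.
have -> : \col_j v j 0 = v by apply/matrixP => i j; rewrite mxE ord1.
by rewrite hv mulr1 ptrace_sum.
Qed.

Lemma dotv_adjl m n (A : 'M[C]_(m,n)) x y : dotv (A *m x) y = dotv x (adj A *m y).
Proof. by rewrite dotv_adj adjK. Qed.

Lemma final_bound (z X Y eta : C) (r : nat) :
  `|z| ^+ 2 <= X * Y -> 0 <= X -> X <= 1 -> 0 <= Y -> Y <= r%:R * eta -> 0 <= eta ->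
  `|z| <= r%:R * sqrtC eta.
Proof.
move=> h hX0 hX1 hY0 hY he.
rewrite -ler_sqr ?nnegrE ?mulr_ge0 ?sqrtC_ge0 ?ler0n //.
rewrite exprMn sqrtCK.
apply: le_trans h _; apply: le_trans (_ : Y <= _).
  by rewrite ler_piMl.
apply: le_trans hY _; apply: ler_wpM2r => //.
rewrite -natrX ler_nat; case: r => // r.
by rewrite expnS leq_pmulr.
Qed.

End Basic.

Unset Implicit Arguments.

Theorem lemmaB11 (C : numClosedFieldType) (m n r : nat) (rho : 'M[C]_(m * n)) (phi : 'cV[C]_(m * n))
    (P : 'M[C]_m) (eta : C) :
  is_density rho ->
  is_pure_state phi ->
  schmidt_rank_le phi r ->
  is_orth_proj P ->
  0 <= eta ->
  opnorm_le ((1%:M - P) *m ptraceB rho *m (1%:M - P)) eta ->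
  `| expect phi ((P *t (1%:M : 'M[C]_n)) *m rho *m (P *t (1%:M : 'M[C]_n)))
     - expect phi rho | <= 2 * r%:R * sqrtC eta.
Proof.
move=> [hH hpsd htr] hpure [s [hs [lam [u [v [hlam hu hv hphi]]]]]] [hPP hPa] heta hop.
set Pt := P *t (1%:M : 'M[C]_n).
have psd : forall z, 0 <= fm rho z z := hpsd.
have adjPt : adj Pt = Pt by rewrite /Pt adj_tens hPa adj1.
have PtPt : Pt *m Pt = Pt by rewrite /Pt tensmx_mul hPP mul1mx.
set a := Pt *m phi. set b := phi - a.
have hbdef : b = phi - a by [].
clearbody b.
have E1 : expect phi (Pt *m rho *m Pt) = fm rho a a.
  by rewrite /expect /fm -!mulmxA dotv_adj adjPt.
have E2 : expect phi rho = fm rho phi phi by [].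
have D : fm rho a a - fm rho phi phi = - (fm rho a b + fm rho b phi).
  by rewrite hbdef fmBl fmBr; ring.
have hphi1 : fm rho phi phi <= 1.
  by apply: le_trans (fm_trace _ hH psd) _; rewrite htr hpure mulr1.
have hab : dotv a b = 0.
  rewrite hbdef dotvDr dotvNr.
  have -> : dotv a a = dotv a phi by rewrite /a dotv_adjl adjPt mulmxA PtPt dotv_adj adjPt.
  by rewrite subrr.
have haa1 : fm rho a a <= 1.
  apply: le_trans (fm_trace _ hH psd) _; rewrite htr mul1r.
  have hsum : a + b = phi by rewrite hbdef addrC subrK.
  have : dotv phi phi = dotv a a + dotv b b.
    rewrite -{1 2}hsum dotvDl !dotvDr hab -(dotv_conj a b) hab.
    by rewrite rmorph0 !addr0 add0r.
  rewrite hpure => h1.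
  by rewrite h1 lerDl dotv_ge0.
set Q := 1%:M - P.
have adjQ : adj Q = Q by rewrite /Q adjD adjN adj1 hPa.
have hb : b = \sum_k lam k *: ((Q *m u k) *t v k).
  rewrite hbdef /a hphi mulmx_sumr -sumrB; apply: eq_bigr => k _.
  by rewrite -scalemxAr mul_tens1 -scalerBr /Q mulmxBl mul1mx tensmxBl.
have hcol : dotv (\col_k lam k) (\col_k lam k) = 1.
  rewrite -hpure hphi -[RHS]fm1 (gram_expand _ (fun k => u k *t v k)).
  have -> : gram 1%:M (fun k => u k *t v k) = 1%:M.
    apply/matrixP => i j; rewrite !mxE fm1 dotv_tens hu hv -natrM.
    by case: (i == j).
  by rewrite fm1.
have hk : forall k, fm rho ((Q *m u k) *t v k) ((Q *m u k) *t v k) <= eta.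
  move=> k.
  have hvk : dotv (v k) (v k) = 1 by rewrite hv eqxx.
  have huk : dotv (u k) (u k) = 1 by rewrite hu eqxx.
  apply: le_trans (tens_form_bound _ hH psd hvk) _.
  have h0 : 0 <= dotv (Q *m u k) (ptraceB rho *m (Q *m u k)).
    by rewrite -ptrace_sum sumr_ge0.
  set y := (1%:M - P) *m ptraceB rho *m (1%:M - P) *m u k.
  have -> : dotv (Q *m u k) (ptraceB rho *m (Q *m u k)) = dotv (u k) y.
    by rewrite dotv_adjl adjQ /y /Q !mulmxA.
  have hy := hop (u k).
  rewrite -/y /vnorm huk sqrtC1 mulr1 in hy.
  have hy0 : dotv (u k) y = `|dotv (u k) y|.
    by rewrite ger0_norm //; move: h0; rewrite dotv_adjl adjQ /y /Q !mulmxA.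
  rewrite hy0 -ler_sqr ?nnegrE //.
  apply: le_trans (dotv_CS _ _) _.
  rewrite huk mul1r -(sqrtCK (dotv y y)).
  by rewrite ler_sqr ?nnegrE ?sqrtC_ge0 ?dotv_ge0.
have hbb : fm rho b b <= r%:R * eta.
  rewrite hb; apply: le_trans (gram_bound _ _ hH psd) _.
  rewrite hcol mulr1.
  apply: le_trans (_ : \sum_(k < s) eta <= _).
    by apply: ler_sum => k _; apply: hk.
  rewrite sumr_const card_ord -mulr_natl.
  by rewrite mulr1 -[eta *+ s]mulr_natl; apply: ler_wpM2r => //; rewrite ler_nat.
have hbb0 := psd b.
have h1 : `|fm rho a b| <= r%:R * sqrtC eta.
  exact: (final_bound (fm_CS _ _ hH psd) (psd a) haa1 hbb0 hbb heta).
have h2 : `|fm rho b phi| <= r%:R * sqrtC eta.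
  apply: (final_bound _ (psd phi) hphi1 hbb0 hbb heta).
  by rewrite mulrC; apply: fm_CS.
rewrite E1 E2 D normrN.
apply: le_trans (ler_normD _ _) _.
have -> : 2 * r%:R * sqrtC eta = r%:R * sqrtC eta + r%:R * sqrtC eta by ring.
exact: lerD.
Qed.
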